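(* Let $\mathbf{r}'=(r'_0,\dots,r'_{2^m-1})\in GF(2^m)^{2^m}$ be arbitrary, and let $f(x)\in GF(2^m)[x]$ be the unique polynomial of degree less than $2^m$ with $f(\omega_j)=r'_j$ for all $0\le j\le 2^m-1$ (equivalently $f(x)=\sum_{j=0}^{2^m-1} r'_j\, s_m(x)/(x-\omega_j)$). Let $0\le\mu\le m$ be an integer and define $$\mathbf{S}_1(x)=\sum_{j=0}^{2^m-1} r'_j\,\frac{s_\mu(x)-s_\mu(\omega_j)}{x-\omega_j}.$$ Then $\mathbf{S}_1(x)$ is the quotient of $f(x)$ upon division by $X_{2^m-2^\mu}(x)$, i.e. $f(x)=\mathbf{S}_1(x)X_{2^m-2^\mu}(x)+\eta_1(x)$ for some $\eta_1(x)$ with $\deg\eta_1(x)<2^m-2^\mu=\deg X_{2^m-2^\mu}(x)$.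
   Context: Fix a basis $\{v_0,\dots,v_{m-1}\}$ of $GF(2^m)$ over $GF(2)$. For $0\le j<2^m$ with binary expansion $j=\sum_{i=0}^{m-1} j_i2^i$ ($j_i\in\{0,1\}$), set $\omega_j=\sum_{i=0}^{m-1} j_i v_i$; these are the $2^m$ distinct elements of $GF(2^m)$. For $0\le\tau\le m$ the subspace polynomial is $s_\tau(x)=\prod_{j=0}^{2^\tau-1}(x-\omega_j)$. For $0\le j<2^m$, $X_j(x)=s_0(x)^{j_0}s_1(x)^{j_1}\cdots s_{m-1}(x)^{j_{m-1}}$, a polynomial of degree $j$. The fraction $\frac{s_\mu(x)-s_\mu(a)}{x-a}$ denotes the exact polynomial quotient. *)

(* Defs.v *)
From HB Require Import structures.
From mathcomp Require Import all_boot all_order all_algebra all_field.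
Set Implicit Arguments. Unset Strict Implicit. Unset Printing Implicit Defensive.
Import GRing.Theory.
Local Open Scope ring_scope.

Definition bit (j i : nat) : nat := (j %/ 2 ^ i) %% 2.

Section Defs.
Variables (F : fieldType) (m : nat) (v : 'I_m -> F).

Definition omega (j : nat) : F := \sum_(i < m | bit j i == 1%N) v i.

Definition subspace_poly (tau : nat) : {poly F} :=
  \prod_(j < 2 ^ tau) ('X - (omega j)%:P).

Definition Xbasis (j : nat) : {poly F} :=
  \prod_(i < m) subspace_poly i ^+ bit j i.

(* S_1(x) = sum_j r'_j (s_mu(x) - s_mu(omega_j)) / (x - omega_j)  (exact quotient) *)
Definition S1 (mu : nat) (r : 'I_(2 ^ m) -> F) : {poly F} :=
  \sum_(j < 2 ^ m) r j *:
     ((subspace_poly mu - ((subspace_poly mu).[omega j])%:P) %/ ('X - (omega j)%:P)).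
End Defs.

Definition GF2_basis (F : fieldType) (m : nat) (v : 'I_m -> F) : Prop :=
  (forall b : 'I_m -> bool, \sum_(i < m | b i) v i = 0 -> forall i, b i = false) /\
  (forall x : F, exists b : 'I_m -> bool, x = \sum_(i < m | b i) v i).

(* Main.v *)
Require Import Defs.
From HB Require Import structures.
From mathcomp Require Import all_boot all_order all_algebra all_field.
From mathcomp Require Import zify ring.
Import GRing.Theory.
Lemma bit_small j i : (j < 2 ^ i)%N -> bit j i = 0%N.
Proof. by move=> h; rewrite /bit divn_small. Qed.

Lemma bit_addself j i : (j < 2 ^ i)%N -> bit (j + 2 ^ i) i = 1%N.
Proof.
move=> h; rewrite /bit addnC -{1}(mul1n (2 ^ i)) divnMDl ?expn_gt0 //.
by rewrite divn_small.
Qed.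

Lemma bit_add_lt j i l : (j < 2 ^ i)%N -> (l < i)%N -> bit (j + 2 ^ i) l = bit j l.
Proof.
move=> h hl; rewrite /bit.
have -> : (2 ^ i = 2 ^ (i - l).-1 * 2 * 2 ^ l)%N.
  by rewrite -expnSr prednK ?subn_gt0 // -expnD subnK // ltnW.
rewrite addnC divnMDl ?expn_gt0 // modnMDl //.
Qed.

Lemma bit_add_gt j i l : (j < 2 ^ i)%N -> (i < l)%N -> bit (j + 2 ^ i) l = bit j l.
Proof.
move=> h hl; rewrite /bit (divn_small (m:=j)); last first.
  by apply: (leq_trans h); rewrite leq_exp2l // ltnW.
rewrite divn_small //.
apply: (@leq_trans (2 ^ i.+1)); last by rewrite leq_exp2l.
by rewrite expnS mul2n -addnn ltn_add2r.
Qed.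

Lemma bit_S j i : bit j i.+1 = bit (j %/ 2) i.
Proof. by rewrite /bit expnS divnMA. Qed.

Lemma bit_0 j : bit j 0 = (j %% 2)%N.
Proof. by rewrite /bit expn0 divn1. Qed.

Lemma bit_le1 j i : (bit j i <= 1)%N.
Proof. by rewrite /bit -ltnS ltn_pmod. Qed.

Lemma bit_eq m : forall j k, (j < 2 ^ m)%N -> (k < 2 ^ m)%N ->
  (forall i, (i < m)%N -> bit j i = bit k i) -> j = k.
Proof.
elim: m => [|m IH] j k hj hk hb.
  by move: hj hk; rewrite expn0 !ltnS !leqn0 => /eqP -> /eqP ->.
rewrite (divn_eq j 2) (divn_eq k 2).
have h0 := hb 0%N isT; rewrite !bit_0 in h0.
rewrite h0 (IH (j %/ 2) (k %/ 2))%N //.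
- by rewrite ltn_divLR // -expnSr.
- by rewrite ltn_divLR // -expnSr.
- by move=> i hi; rewrite -!bit_S hb.
Qed.

Lemma bit_X m mu i : (mu <= m)%N -> (i < m)%N -> bit (2 ^ m - 2 ^ mu) i = (mu <= i)%N.
Proof.
move=> hmu hi; rewrite /bit.
case: (leqP mu i) => hmi.
- have e : (2 ^ m - 2 ^ mu = (2 ^ (m - i) - 1) * 2 ^ i + (2 ^ i - 2 ^ mu))%N.
    have e1 : (2 ^ m = 2 ^ (m - i) * 2 ^ i)%N by rewrite -expnD subnK // ltnW.
    have e2 : (2 ^ mu <= 2 ^ i)%N by rewrite leq_exp2l.
    have e3 : (1 <= 2 ^ (m - i))%N by rewrite expn_gt0.
    rewrite e1; nia.
  rewrite e divnMDl ?expn_gt0 // divn_small ?addn0; last first.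
    have : (0 < 2 ^ mu)%N by rewrite expn_gt0.
    have : (2 ^ mu <= 2 ^ i)%N by rewrite leq_exp2l.
    lia.
  have -> : (2 ^ (m - i) = 2 ^ (m - i).-1 * 2)%N by rewrite -expnSr prednK // subn_gt0.
  have : (1 <= 2 ^ (m - i).-1)%N by rewrite expn_gt0.
  move: (2 ^ (m - i).-1)%N => c hc.
  have -> : (c * 2 - 1 = (c - 1) * 2 + 1)%N by lia.
  by rewrite modnMDl.
- have e : (2 ^ m - 2 ^ mu = (2 ^ (m - i).-1 - 2 ^ (mu - i).-1) * 2 * 2 ^ i)%N.
    rewrite mulnBl -!expnSr !prednK ?subn_gt0 // ?(leq_trans hmi) //.
    by rewrite mulnBl -!expnD !subnK // ltnW // (leq_trans hmi).
  by rewrite e mulnK ?expn_gt0 // modnMl.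
Qed.
Set Implicit Arguments. Unset Strict Implicit. Unset Printing Implicit Defensive.
Local Open Scope ring_scope.

Lemma omega0 (F : fieldType) m (v : 'I_m -> F) : omega v 0 = 0.
Proof. by rewrite /omega big1 // => i; rewrite /bit div0n mod0n. Qed.

Lemma omega_add (F : fieldType) m (v : 'I_m -> F) (i : 'I_m) j :
  (j < 2 ^ i)%N -> omega v (j + 2 ^ i) = omega v j + v i.
Proof.
move=> hj; rewrite /omega (bigD1 i) ?bit_addself //=.
rewrite addrC; congr (_ + _); apply: eq_bigl => l.
case: (eqVneq l i) => [->|hli] /=; first by rewrite andbF bit_small.
rewrite andbT; case: (ltngtP l i) => hl.
- by rewrite bit_add_lt.
- by rewrite bit_add_gt.
- by move: hli; rewrite -(inj_eq val_inj) /= hl eqxx.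
Qed.

Lemma pchar2_poly {F : fieldType} : 2%N \in [pchar F] -> 2%N \in [pchar {poly F}].
Proof. by move=> h; rewrite pchar_poly. Qed.

Lemma comp_prod (F : fieldType) n (G : 'I_n -> {poly F}) q :
  (\prod_(j < n) G j) \Po q = \prod_(j < n) (G j \Po q).
Proof.
apply: (big_morph (fun p => p \Po q)); first by move=> x y; rewrite comp_polyM.
by rewrite comp_polyC.
Qed.

Lemma P_succ (F : fieldType) m (v : 'I_m -> F) (hchar : 2%N \in [pchar F]) (i : 'I_m)
  (Padd : forall a, subspace_poly v i \Po ('X + a%:P) =
           subspace_poly v i + ((subspace_poly v i).[a])%:P) :
  subspace_poly v i.+1 = subspace_poly v i *
     (subspace_poly v i + ((subspace_poly v i).[v i])%:P).
Proof.
rewrite -Padd /subspace_poly comp_prod.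
rewrite -!(big_mkord xpredT (fun j => 'X - (omega v j)%:P)).
rewrite expnS mul2n -addnn (big_cat_nat (leq0n _) (leq_addr _ _)) /=.
congr (_ * _).
rewrite (big_addn 0 _ (2 ^ i)) addnK.
rewrite -(big_mkord xpredT (fun j => ('X - (omega v j)%:P) \Po ('X + (v i)%:P))).
apply: eq_big_nat => j /andP[_ hj].
rewrite omega_add //= comp_polyB comp_polyX comp_polyC polyCD.
rewrite !(GRing.subr_pchar2 (@pchar2_poly _ hchar)).
by rewrite addrA addrAC.
Qed.

Lemma P0 (F : fieldType) m (v : 'I_m -> F) : subspace_poly v 0 = 'X.
Proof. by rewrite /subspace_poly big_ord1 /= omega0 subr0. Qed.

Lemma P_add (F : fieldType) m (v : 'I_m -> F) (hchar : 2%N \in [pchar F]) :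
  forall i, (i <= m)%N -> forall a,
  subspace_poly v i \Po ('X + a%:P) = subspace_poly v i + ((subspace_poly v i).[a])%:P.
Proof.
have hp := @pchar2_poly _ hchar.
elim=> [|i IH] hi a.
  by rewrite P0 comp_polyX hornerX.
have E := @P_succ F m v hchar (Ordinal hi) (IH (ltnW hi)); rewrite /= in E.
rewrite E comp_polyM comp_polyD comp_polyC !IH ?(ltnW hi) //.
rewrite hornerM hornerD hornerC polyCM polyCD.
set P := subspace_poly v i; set d := (P.[a])%:P; set c := (P.[v (Ordinal hi)])%:P.
transitivity (P * (P + c) + d * (d + c) + (P * d + P * d)); first by ring.
by rewrite (GRing.addrr_pchar2 hp) addr0.
Qed.

Lemma size_P (F : fieldType) m (v : 'I_m -> F) k :
  size (subspace_poly v k) = (2 ^ k).+1.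
Proof. rewrite /subspace_poly size_prod_XsubC -[in RHS](card_ord (2 ^ k)) cardT enumT.
by rewrite /index_enum !unlock. Qed.

Definition Yp (F : fieldType) m (v : 'I_m -> F) mu k :=
  \prod_(i < k) subspace_poly v i ^+ (mu <= i)%N.

Lemma deg_main (F : fieldType) m (v : 'I_m -> F) (hchar : 2%N \in [pchar F]) mu :
  forall d, (mu + d <= m)%N -> exists R : {poly F},
  subspace_poly v mu * Yp v mu (mu + d) = subspace_poly v (mu + d) + R /\
  (size R <= 2 ^ (mu + d) - 2 ^ mu + 1)%N.
Proof.
elim=> [|d IH] hd.
  exists 0; rewrite addn0 size_poly0 addr0; split => //.
  by rewrite /Yp big1 ?mulr1 // => i _; rewrite leqNgt ltn_ord expr0.
have hk : (mu + d < m)%N by rewrite -addnS.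
have [R [ER sR]] := IH (ltnW hk).
have E := @P_succ F m v hchar (Ordinal hk) (@P_add F m v hchar _ (ltnW hk)); rewrite /= in E.
set P := subspace_poly v (mu + d) in E ER sR *.
set c := (P.[v (Ordinal hk)])%:P in E.
exists (R * P - P * c); split.
  rewrite addnS E /Yp big_ord_recr /= -/(Yp v mu (mu + d)) leq_addr expr1 mulrA ER.
  by rewrite -/P; ring.
have sP := size_P v (mu + d); rewrite -/P in sP.
apply: (leq_trans (size_polyD _ _)); rewrite size_polyN geq_max; apply/andP; split.
  apply: (leq_trans (size_mul_leq _ _)); rewrite sP (addnS mu d) expnS.
  have : (2 ^ mu <= 2 ^ (mu + d))%N by rewrite leq_exp2l // leq_addr.
  lia.
rewrite mulrC mul_polyC; apply: (leq_trans (size_scale_leq _ _)); rewrite sP (addnS mu d) expnS.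
have : (2 ^ mu <= 2 ^ (mu + d))%N by rewrite leq_exp2l // leq_addr.
lia.
Qed.

Lemma om_inj (F : fieldType) m (v : 'I_m -> F) (hchar : 2%N \in [pchar F])
  (hv : GF2_basis v) (j k : 'I_(2 ^ m)) : omega v j = omega v k -> j = k.
Proof.
move=> ejk; apply: val_inj; apply: (@bit_eq m); [exact: ltn_ord | exact: ltn_ord | move=> i hi].
set A := fun l : 'I_m => bit j l == 1%N.
set B := fun l : 'I_m => bit k l == 1%N.
have key : \sum_(l < m | A l != B l) v l = 0.
  move: ejk; rewrite /omega -/A -/B.
  rewrite (bigID B) [X in _ = X](bigID A) /=.
  rewrite [X in _ = X + _](eq_bigl (fun l => A l && B l)); last by move=> l; rewrite andbC.
  move/addrI => e.
  rewrite (bigID A) /=.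
  rewrite (eq_bigl (fun l => A l && ~~ B l)); last by move=> l; case: (A l); case: (B l).
  rewrite [X in _ + X](eq_bigl (fun l => B l && ~~ A l)); last by move=> l; case: (A l); case: (B l).
  by rewrite e (GRing.addrr_pchar2 hchar).
have := hv.1 _ key (Ordinal hi); rewrite /A /B /= => /negbFE /eqP.
have := bit_le1 j i; have := bit_le1 k i.
case: (bit j i) => [|[|x]] //; case: (bit k i) => [|[|y]] //.
Qed.

Lemma Pm_gen (F : finFieldType) m (v : 'I_m -> F) (hchar : 2%N \in [pchar F])
  (hcard : #|F| = (2 ^ m)%N) (hv : GF2_basis v) :
  subspace_poly v m = 'X^#|F| - 'X.
Proof.
rewrite finField_genPoly /subspace_poly.
have bij : bijective (fun j : 'I_(2 ^ m) => omega v j).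
  by apply: inj_card_bij; [exact: om_inj | rewrite hcard card_ord].
by rewrite (reindex (fun j : 'I_(2 ^ m) => omega v j)) //=; exact: onW_bij.
Qed.

Lemma m_pos (F : finFieldType) m (hcard : #|F| = (2 ^ m)%N) : (0 < m)%N.
Proof.
have := card_finNzRing_gt1 F; rewrite hcard; case: m {hcard} => //.
Qed.

Definition Lp (F : fieldType) m (v : 'I_m -> F) (j : nat) :=
  subspace_poly v m %/ ('X - (omega v j)%:P).

Lemma root_Pm (F : fieldType) m (v : 'I_m -> F) (j : 'I_(2 ^ m)) :
  root (subspace_poly v m) (omega v j).
Proof.
by rewrite /root /subspace_poly (bigD1 j) //= hornerM hornerXsubC subrr mul0r.
Qed.

Lemma LpK (F : fieldType) m (v : 'I_m -> F) (j : 'I_(2 ^ m)) :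
  Lp v j * ('X - (omega v j)%:P) = subspace_poly v m.
Proof. by rewrite /Lp divpK // dvdp_XsubCl root_Pm. Qed.

Lemma Lp_eval (F : finFieldType) m (v : 'I_m -> F) (hchar : 2%N \in [pchar F])
  (hcard : #|F| = (2 ^ m)%N) (hv : GF2_basis v) (j k : 'I_(2 ^ m)) :
  (Lp v j).[omega v k] = (j == k)%:R.
Proof.
case: (eqVneq j k) => [<-|hjk].
  have := congr1 (fun p => (p^`()).[omega v j]) (LpK v j).
  rewrite /= derivM derivXsubC hornerD hornerM hornerXsubC subrr mulr0 hornerM hornerC add0r mulr1.
  move=> ->; rewrite (Pm_gen hchar hcard hv) derivB derivXn derivX hornerD hornerN.
  rewrite hornerMn hornerC hcard.
  have hm := m_pos hcard.
  have e2 : (2 ^ m = 2 ^ m.-1 * 2)%N by rewrite -expnSr prednK.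
  rewrite [X in _ *+ X]e2 mulrnA.
  rewrite mulr2n (GRing.addrr_pchar2 hchar) sub0r.
  by rewrite (GRing.oppr_pchar2 hchar).
have := congr1 (fun p => p.[omega v k]) (LpK v j).
rewrite /= hornerM hornerXsubC (rootP (root_Pm v k)) => /eqP.
rewrite mulf_eq0 subr_eq0 => /orP [/eqP -> //|/eqP /om_inj].
by move/(_ hchar hv) => ekj; rewrite ekj eqxx in hjk.
Qed.

Lemma size_sum_le (F : fieldType) n (G : 'I_n -> {poly F}) N :
  (forall j, (size (G j) <= N)%N) -> (size (\sum_(j < n) G j)%R <= N)%N.
Proof.
move=> h; elim/big_ind: _ => //; first by rewrite size_poly0.
by move=> x y hx hy; apply: leq_trans (size_polyD _ _) _; rewrite geq_max hx hy.
Qed.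

Lemma size_Lp (F : fieldType) m (v : 'I_m -> F) j : size (Lp v j) = (2 ^ m)%N.
Proof. by rewrite /Lp size_divp ?polyXsubC_eq0 // size_P size_XsubC subn1. Qed.

Lemma interp (F : finFieldType) m (v : 'I_m -> F) (hchar : 2%N \in [pchar F])
  (hcard : #|F| = (2 ^ m)%N) (hv : GF2_basis v) (r : 'I_(2 ^ m) -> F) (f : {poly F})
  (hfdeg : (size f <= 2 ^ m)%N)
  (hfint : forall j : 'I_(2 ^ m), f.[omega v j] = r j) :
  f = \sum_(j < 2 ^ m) r j *: Lp v j.
Proof.
apply/eqP; rewrite -subr_eq0; apply/negPn/negP => hne.
have := max_poly_roots hne (rs := (map (fun j : 'I_(2 ^ m) => omega v j) (enum 'I_(2 ^ m)))).
rewrite size_map size_enum_ord.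
have -> : all (root (f - \sum_(j < 2 ^ m) r j *: Lp v j)) (map (fun j : 'I_(2 ^ m) => omega v j) (enum 'I_(2 ^ m))).
  apply/allP => x /mapP [k _ ->]; rewrite /root hornerD hornerN horner_sum hfint.
  rewrite (bigD1 k) //= hornerZ (Lp_eval hchar hcard hv) eqxx mulr1 big1 ?addr0 ?subrr //.
  by move=> j /negbTE hjk; rewrite hornerZ (Lp_eval hchar hcard hv) hjk mulr0.
rewrite map_inj_uniq ?enum_uniq; last by move=> j k; exact: om_inj.
move=> /(_ isT isT); apply/negP; rewrite -leqNgt.
apply: leq_trans (size_polyD _ _) _; rewrite size_polyN geq_max hfdeg /=.
apply: size_sum_le => j; apply: leq_trans (size_scale_leq _ _) _; by rewrite size_Lp.
Qed.

Theorem lemma2 (F : finFieldType) (m : nat) (hchar : 2%N \in [pchar F])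
  (hcard : #|F| = (2 ^ m)%N) (v : 'I_m -> F) (hv : GF2_basis v)
  (r : 'I_(2 ^ m) -> F) (f : {poly F})
  (hfdeg : (size f <= 2 ^ m)%N)
  (hfint : forall j : 'I_(2 ^ m), f.[omega v j] = r j)
  (mu : nat) (hmu : (mu <= m)%N) :
  exists eta : {poly F},
    f = S1 v mu r * Xbasis v (2 ^ m - 2 ^ mu) + eta /\
    (size eta < size (Xbasis v (2 ^ m - 2 ^ mu)))%N.
Proof.
set Xb := Xbasis v (2 ^ m - 2 ^ mu).
have EX : Xb = Yp v mu m.
  by rewrite /Xb /Xbasis /Yp; apply: eq_bigr => i _; rewrite bit_X.
have := @deg_main F m v hchar mu (m - mu); rewrite subnKC // -EX => /(_ (leqnn m)) [R [ER sR]].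
have hmu1 : (1 <= 2 ^ mu)%N by rewrite expn_gt0.
have hmum : (2 ^ mu <= 2 ^ m)%N by rewrite leq_exp2l.
have sPR : size (subspace_poly v m + R) = (2 ^ m).+1.
  by rewrite size_polyDl size_P //; apply: leq_trans sR _; lia.
have sX : size Xb = (2 ^ m - 2 ^ mu + 1)%N.
  have hX : Xb != 0.
    by apply/eqP => hX; move: sPR; rewrite -ER hX mulr0 size_poly0.
  have hP : subspace_poly v mu != 0 by rewrite -size_poly_gt0 size_P.
  move: sPR; rewrite -ER size_mul // size_P; move: (size Xb) => s; lia.
exists (f - S1 v mu r * Xb); split; first by rewrite addrC subrK.
rewrite sX addn1 ltnS.
rewrite {1}(interp hchar hcard hv hfdeg hfint) /S1 mulr_suml -sumrB.
apply: size_sum_le => j; rewrite -scalerAl -scalerBr.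
apply: leq_trans (size_scale_leq _ _) _.
set a := omega v j.
set Q := (subspace_poly v mu - ((subspace_poly v mu).[a])%:P) %/ ('X - a%:P).
have EQ : Q * ('X - a%:P) = subspace_poly v mu - ((subspace_poly v mu).[a])%:P.
  by rewrite /Q divpK // dvdp_XsubCl /root hornerD hornerN hornerC subrr.
set D := Lp v j - Q * Xb.
have ED : D * ('X - a%:P) = - R + ((subspace_poly v mu).[a])%:P * Xb.
  rewrite /D mulrBl LpK -mulrA [Xb * _]mulrC mulrA EQ mulrBl ER.
  by ring.
have sD : (size (D * ('X - a%:P))%R <= 2 ^ m - 2 ^ mu + 1)%N.
  rewrite ED; apply: leq_trans (size_polyD _ _) _; rewrite size_polyN geq_max sR /=.
  rewrite mul_polyC; apply: leq_trans (size_scale_leq _ _) _; by rewrite sX.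
case: (eqVneq D 0) => [->|hD]; first by rewrite size_poly0.
move: sD; rewrite size_mul ?polyXsubC_eq0 // size_XsubC; have -> : (2%R : nat) = 2%N by [].
move: (size D) => s; lia.
Qed.
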